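(* Let $\pi$ be a (not necessarily unique) QSD of $(X_t)_{0\le t<\tau_\partial}$, $\lambda=\lambda(\pi)$, and assume condition (DAD) holds with set $A$, function $\psi$, constants $c_0',c_1>0$ and times $t_0,t_1>0$. Define $t_3:=t_0+t_1$ and $$c_3:=\frac{\lambda^{t_0}c_0'c_1}{\Lambda(A)\|\psi\|_\infty\|1/\psi\|_\infty\|\frac{d\pi}{d\Lambda}\|_{L^\infty(\Lambda)}}.$$ Then $\dfrac{P_{t_3}(x,\cdot)}{P_{t_3}1(x)}\ge c_3\pi(\cdot)$ for every $x\in\chi$.
   Context: $\chi$ is a metric space with Borel $\sigma$-algebra and a distinguished $\sigma$-finite Borel measure $\Lambda$ of full support. $(X_t)_{0\le t<\tau_\partial}$ is a killed Markov process on $\chi$ (discrete or continuous time), absorption time $\tau_\partial$, submarkovian semigroup $P_t(x,A)=\mathbb P_x(X_t\in A,\tau_\partial>t)$; $K1(x)=K(x,\chi)$. A QSD is $\pi\in\mathcal P(\chi)$ with $\mathbb P_\pi(X_t\in\cdot\mid\tau_\partial>t)=\pi$ for all $t$; $\lambda(\pi)=\mathbb P_\pi(\tau_\partial>1)$. $\mathcal P_\infty(\Lambda)$ = probability measures $\ll\Lambda$ with density in $L^\infty(\Lambda)$. $\mathcal B_{b,\gg}(\chi)$ = bounded Borel functions with positive infimum. (AD): there exist $\psi\in\mathcal B_{b,\gg}(\chi)$, $t_0>0$, $a>0$ and a submarkovian kernel $\tilde P$ with $\psi(x)\Lambda(dx)P_{t_0}(x,dy)=a\psi(y)\Lambda(dy)\tilde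 P(y,dx)$ on $\chi\times\chi$, $\tilde P1(y)>0$ for $\Lambda$-a.e. $y$, and $c_0'>0$, $\nu\in\mathcal P(\chi)$ not mutually singular with $\pi$ with $\tilde P(y,\cdot)/\tilde P1(y)\ge c_0'\nu$ for $\Lambda$-a.e. $y$. (DAD) Combined Dobrushin and adjoint Dobrushin condition: $\pi\in\mathcal P_\infty(\Lambda)$; there are a Borel set $A$ with $\Lambda(A)<\infty$, $\nu_1\in\mathcal P(\chi)$ with $\nu_1(\chi\setminus A)=0$, $c_1>0$, $t_1>0$ with $P_{t_1}1(x)>0$ for all $x$ and $P_{t_1}(x,\cdot)/P_{t_1}1(x)\ge c_1\nu_1$ for all $x\in\chi$ (this forces $\pi(A)>0$, hence $\Lambda(A)>0$); and (AD) holds with $\nu:=\Lambda|_A/\Lambda(A)$, some $c_0'>0$ and $t_0>0$. *)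

(* Defs.v *)
From HB Require Import structures.
From mathcomp Require Import all_boot all_order all_algebra.
From mathcomp Require Import all_classical all_reals all_analysis.
From mathcomp Require Import ess_sup_inf.

Set Implicit Arguments.
Unset Strict Implicit.
Unset Printing Implicit Defensive.

Import Order.TTheory GRing.Theory Num.Def Num.Theory.
Import numFieldNormedType.Exports.

Local Open Scope classical_set_scope.
Local Open Scope ring_scope.

(* MathComp-Analysis measurable types must be pointed, so a point x0 of M is
   used to equip (an alias of) M with a pointed structure; x0 plays no other
   role (chi is nonempty anyway since it carries a probability measure). *)
Definition pt_metric (R : realType) (M : metricType R) (x0 : M) : Type := M.
HB.instance Definition _ (R : realType) (M : metricType R) (x0 : M) :=
  Choice.on (@pt_metric _ M x0).
HB.instance Definition _ (R : realType) (M : metricType R) (x0 : M) :=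
  isPointed.Build (@pt_metric _ M x0) x0.
Definition borel_space (R : realType) (M : metricType R) (x0 : M) :=
  @g_sigma_algebraType (@pt_metric _ M x0) (@open M).

Definition is_time (R : realType) (disc : bool) (t : R) : Prop :=
  if disc then exists n : nat, t = n%:R else 0 <= t.

Definition killed_semigroup d (R : realType) (T : measurableType d)
    (disc : bool) (P : R -> R.-spker T ~> T) : Prop :=
  (forall x (A : set T), measurable A -> P 0 x A = \d_x A) /\
  (forall s t, is_time disc s -> is_time disc t ->
     forall x (A : set T), measurable A ->
       P (s + t) x A = (\int[P s x]_y P t y A)%E).

(* Quasi-stationary distribution: for every time t, P_pi(tau > t) > 0 and
   P_pi(X_t in . | tau > t) = pi. *)
Definition is_QSD d (R : realType) (T : measurableType d) (disc : bool)
    (P : R -> R.-spker T ~> T) (pi : probability T R) : Prop :=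
  forall t, is_time disc t ->
    (0 < \int[pi]_x P t x setT)%E /\
    forall A : set T, measurable A ->
      (\int[pi]_x P t x A = (\int[pi]_x P t x setT) * pi A)%E.

Definition lambda_QSD d (R : realType) (T : measurableType d)
    (P : R -> R.-spker T ~> T) (pi : probability T R) : R :=
  fine (\int[pi]_x P 1%R x setT)%E.

Definition mutually_singular d (R : realType) (T : measurableType d)
    (m1 m2 : set T -> \bar R) : Prop :=
  exists S : set T, measurable S /\ m1 S = 0%E /\ m2 (~` S) = 0%E.

Definition normalized_restriction d (R : realType) (T : measurableType d)
    (Lam : set T -> \bar R) (A : set T) : set T -> \bar R :=
  fun B => (fine (Lam (B `&` A)) / fine (Lam A))%:E.

Definition sup_norm (R : realType) (T : Type) (f : T -> R) : R :=
  sup [set `|f x| | x in [set: T]].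

(* Main.v *)
Require Import Defs.
From HB Require Import structures.
From mathcomp Require Import all_boot all_order all_algebra.
From mathcomp Require Import all_classical all_reals all_analysis.
From mathcomp Require Import ess_sup_inf measurable_realfun.
From mathcomp Require Import ring lra.

Import Order.TTheory GRing.Theory Num.Def Num.Theory.
Import numFieldNormedType.Exports.

Local Open Scope classical_set_scope.
Local Open Scope ring_scope.

Set Implicit Arguments.
Unset Strict Implicit.
Unset Printing Implicit Defensive.

Section mix.
Context d (X : measurableType d) (R : realType).
Import HBNNSimple.
Local Open Scope ereal_scope.

Lemma integral_nnsfun_sum (mu : {measure set X -> \bar R}) (h : {nnsfun X >-> R}) :
  \int[mu]_x (h x)%:E = \sum_(r \in range h) (r%:E * mu (h @^-1` [set r])).
Proof.
under eq_integral do rewrite fimfunE -fsumEFin//.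
rewrite ge0_integral_fsum//; last 2 first.
  - by move=> r; exact/measurable_EFinP/measurableT_comp.
  - by move=> r z _; rewrite EFinM nnfun_muleindic_ge0.
apply: eq_fsbigr => r _.
rewrite (integralZl_indic _ (fun r => h @^-1` [set r]))//; last first.
  by move=> r0; rewrite preimage_nnfun0.
by rewrite integral_indic// setIT.
Qed.

Variables (k : X -> {measure set X -> \bar R})
  (mk : forall U, measurable U -> measurable_fun setT (k ^~ U)).

Lemma integral_mix_nnsfun (m : {measure set X -> \bar R}) (h : {nnsfun X >-> R}) :
  \int[m]_x \int[k x]_y (h y)%:E =
  \sum_(r \in range h) (r%:E * \int[m]_x k x (h @^-1` [set r])).
Proof.
under eq_integral do rewrite integral_nnsfun_sum.
rewrite ge0_integral_fsum//; last 2 first.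
  - by move=> r; apply/measurable_funeM/mk.
  - by move=> r x _; have [r0|r0] := leP 0%R r; [rewrite mule_ge0|rewrite preimage_nnfun0// measure0 mule0].
apply: eq_fsbigr => r _.
have [r0|r0] := leP 0%R r.
  by rewrite ge0_integralZl//; exact: mk.
rewrite preimage_nnfun0//.
rewrite integral0_eq => [|x _]; last by rewrite measure0 mule0.
by rewrite integral0_eq ?mule0// => x _; rewrite measure0.
Qed.

Lemma integral_lim_approx (mu : {measure set X -> \bar R}) f
  (f0 : forall x, 0 <= f x) (mf : measurable_fun setT f) :
  \int[mu]_x f x = limn (fun n => \int[mu]_x ((nnsfun_approx measurableT mf n) x)%:E).
Proof.
rewrite -monotone_convergence//=.
- apply: eq_integral => x _; apply/esym/cvg_lim => //=.
  exact: cvg_nnsfun_approx.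
- by move=> n; exact/measurable_EFinP.
- by move=> n x _; rewrite lee_fin.
- by move=> x _ a b ab; rewrite lee_fin//; exact/lefP/nd_nnsfun_approx.
Qed.

Lemma integral_mix_lim_approx (m : {measure set X -> \bar R}) f
  (f0 : forall x, 0 <= f x) (mf : measurable_fun setT f) :
  \int[m]_x \int[k x]_y f y =
  limn (fun n => \int[m]_x \int[k x]_y ((nnsfun_approx measurableT mf n) y)%:E).
Proof.
under eq_integral do rewrite (integral_lim_approx _ f0 mf).
rewrite -monotone_convergence//=.
- move=> n; apply: measurable_fun_integral_kernel => //.
  + by move=> z; rewrite lee_fin.
  + exact/measurable_EFinP.
- by move=> n y _; apply: integral_ge0 => // z _; rewrite lee_fin.
- move=> y _ a b ab; apply: ge0_le_integral => //.
  + by move=> z _; rewrite lee_fin.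
  + exact/measurable_EFinP.
  + exact/measurable_EFinP.
  + by move=> z _; rewrite lee_fin; exact/lefP/nd_nnsfun_approx.
Qed.

Lemma cvg_mix (m : {measure set X -> \bar R}) f (mf : measurable_fun setT f) :
  cvgn (fun n => \int[m]_x \int[k x]_y ((nnsfun_approx measurableT mf n) y)%:E).
Proof.
have mi n : measurable_fun setT
   (fun x => \int[k x]_y ((nnsfun_approx measurableT mf n) y)%:E).
  apply: measurable_fun_integral_kernel => //.
  + by move=> z; rewrite lee_fin.
  + exact/measurable_EFinP.
have ip n x : 0 <= \int[k x]_y ((nnsfun_approx measurableT mf n) y)%:E.
  by apply: integral_ge0 => z _; rewrite lee_fin.
apply/ereal_nondecreasing_is_cvgn => a b ab.
apply: ge0_le_integral => // x _.
apply: ge0_le_integral => //; try (by move=> z _; rewrite lee_fin); try exact/measurable_EFinP.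
by move=> z _; rewrite lee_fin; exact/lefP/nd_nnsfun_approx.
Qed.

Lemma cvg_approx (mu : {measure set X -> \bar R}) f (mf : measurable_fun setT f) :
  cvgn (fun n => \int[mu]_x ((nnsfun_approx measurableT mf n) x)%:E).
Proof.
apply/ereal_nondecreasing_is_cvgn => a b ab; apply: ge0_le_integral => //.
all: try (by move=> z _; rewrite lee_fin); try exact/measurable_EFinP.
by move=> z _; rewrite lee_fin; exact/lefP/nd_nnsfun_approx.
Qed.

Lemma integral_mix_le (m mu : {measure set X -> \bar R}) f
  (f0 : forall x, 0 <= f x) (mf : measurable_fun setT f) :
  (forall A, measurable A -> \int[m]_x k x A <= mu A) ->
  \int[m]_x \int[k x]_y f y <= \int[mu]_y f y.
Proof.
move=> H; rewrite (integral_mix_lim_approx _ f0 mf) (integral_lim_approx _ f0 mf).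
apply: lee_lim; [exact: cvg_mix|exact: cvg_approx|].
apply: nearW => n; rewrite integral_mix_nnsfun integral_nnsfun_sum.
apply: lee_fsum => // r [x _ <-].
apply: lee_wpmul2l; first by rewrite lee_fin.
exact: H.
Qed.

Lemma integral_mix_ge (m mu : {measure set X -> \bar R}) f
  (f0 : forall x, 0 <= f x) (mf : measurable_fun setT f) :
  (forall A, measurable A -> mu A <= \int[m]_x k x A) ->
  \int[mu]_y f y <= \int[m]_x \int[k x]_y f y.
Proof.
move=> H; rewrite (integral_mix_lim_approx _ f0 mf) (integral_lim_approx _ f0 mf).
apply: lee_lim; [exact: cvg_approx|exact: cvg_mix|].
apply: nearW => n; rewrite integral_mix_nnsfun integral_nnsfun_sum.
apply: lee_fsum => // r [x _ <-].
apply: lee_wpmul2l; first by rewrite lee_fin.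
exact: H.
Qed.

Lemma integral_le_measure (m mu : {measure set X -> \bar R}) f
  (f0 : forall x, 0 <= f x) (mf : measurable_fun setT f) :
  (forall A, measurable A -> m A <= mu A) ->
  \int[m]_y f y <= \int[mu]_y f y.
Proof.
move=> H; rewrite (integral_lim_approx _ f0 mf) (integral_lim_approx _ f0 mf).
apply: lee_lim; [exact: cvg_approx|exact: cvg_approx|].
apply: nearW => n; rewrite !integral_nnsfun_sum.
apply: lee_fsum => // r [x _ <-].
apply: lee_wpmul2l; first by rewrite lee_fin.
exact: H.
Qed.

End mix.


Lemma time0 (R : realType) disc : is_time disc (0 : R).
Proof. by case: disc => /=; [exists 0%N|]. Qed.
Lemma time_nat (R : realType) disc (n : nat) : is_time disc (n%:R : R).
Proof. by case: disc => /=; [exists n|]. Qed.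
Lemma time_ge0 (R : realType) disc (t : R) : is_time disc t -> 0 <= t.
Proof. by case: disc => /= [[n ->]|]. Qed.
Lemma timeD (R : realType) disc (s t : R) : is_time disc s -> is_time disc t -> is_time disc (s + t).
Proof. by case: disc => /= [[m ->] [n ->]|]; [exists (m + n)%N; rewrite natrD|exact: addr_ge0]. Qed.
Lemma timeMn (R : realType) disc (t : R) (n : nat) : is_time disc t -> is_time disc (n%:R * t).
Proof. by case: disc => /= [[m ->]|]; [exists (n * m)%N; rewrite natrM|move=> ?; exact: mulr_ge0]. Qed.

Definition fQ d (T : measurableType d) (R : realType) (P : R -> R.-spker T ~> T)
  (pi : probability T R) (t : R) : R := fine (\int[pi]_x P t x setT)%E.

Section fQ_lemmas.
Local Open Scope ereal_scope.

Lemma intP_ge0 d (T : measurableType d) (R : realType) (P : R -> R.-spker T ~> T)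
  (pi : probability T R) t (A : set T) : 0 <= \int[pi]_x P t x A.
Proof. exact: integral_ge0. Qed.

Lemma intP_le1 d (T : measurableType d) (R : realType) (P : R -> R.-spker T ~> T)
  (pi : probability T R) t (A : set T) : measurable A -> \int[pi]_x P t x A <= 1.
Proof.
move=> mA; apply: (@le_trans _ _ (\int[pi]_x (cst 1 x))).
  apply: ge0_le_integral => //.
  - exact: measurable_kernel.
  - move=> y _; apply: le_trans (sprob_kernel_le1 (P t) y).
    by apply: le_measure => //; rewrite inE.
by rewrite integral_cst//= mul1e probability_le1.
Qed.

Lemma fQE d (T : measurableType d) (R : realType) (P : R -> R.-spker T ~> T)
  (pi : probability T R) t : \int[pi]_x P t x setT = (fQ P pi t)%:E.
Proof.
rewrite /fQ fineK// ge0_fin_numE ?intP_ge0//.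
by apply: le_lt_trans (intP_le1 _ _ _ measurableT) _; rewrite ltry.
Qed.

Lemma fQ_ge0 d (T : measurableType d) (R : realType) (P : R -> R.-spker T ~> T)
  (pi : probability T R) t : (0 <= fQ P pi t)%R.
Proof. by rewrite -lee_fin -fQE intP_ge0. Qed.

Lemma fQ_le1 d (T : measurableType d) (R : realType) (P : R -> R.-spker T ~> T)
  (pi : probability T R) t : (fQ P pi t <= 1)%R.
Proof. by rewrite -lee_fin -fQE intP_le1. Qed.

Lemma fQ_gt0 d (T : measurableType d) (R : realType) disc (P : R -> R.-spker T ~> T)
  (pi : probability T R) t : is_QSD disc P pi -> is_time disc t -> (0 < fQ P pi t)%R.
Proof. by move=> hQ ht; rewrite -lte_fin -fQE; case: (hQ t ht). Qed.

Lemma QSD_set d (T : measurableType d) (R : realType) disc (P : R -> R.-spker T ~> T)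
  (pi : probability T R) t (A : set T) : is_QSD disc P pi -> is_time disc t -> measurable A ->
  \int[pi]_x P t x A = (fQ P pi t)%:E * pi A.
Proof. by move=> hQ ht mA; rewrite -fQE; case: (hQ t ht) => _ ->. Qed.

Lemma fQ_mul d (T : measurableType d) (R : realType) disc (P : R -> R.-spker T ~> T)
  (pi : probability T R) s t : killed_semigroup disc P -> is_QSD disc P pi ->
  is_time disc s -> is_time disc t ->
  fQ P pi (s + t) = (fQ P pi s * fQ P pi t)%R.
Proof.
move=> [_ CK] hQ hs ht.
have E : \int[pi]_x P (s + t)%R x setT = \int[pi]_x \int[P s x]_y P t y setT.
  by apply: eq_integral => x _; rewrite CK.
pose mu := mscale (NngNum (fQ_ge0 P pi s)) pi.
have mk : forall U, measurable U -> measurable_fun setT ((fun x => P s x) ^~ U).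
  by move=> U mU; exact: measurable_kernel.
have mf : measurable_fun setT (fun y => P t y setT) by exact: measurable_kernel.
have H1 : \int[pi]_x \int[P s x]_y P t y setT = \int[mu]_y P t y setT.
  apply/eqP; rewrite eq_le; apply/andP; split.
    apply: (integral_mix_le mk) => // A mA.
    by rewrite (QSD_set hQ)//=.
  apply: (integral_mix_ge mk) => // A mA.
  by rewrite (QSD_set hQ)//=.
move: H1; rewrite -E ge0_integral_mscale//= !fQE -EFinM.
by move=> [].
Qed.

End fQ_lemmas.


Lemma fQ0 d (T : measurableType d) (R : realType) disc (P : R -> R.-spker T ~> T)
  (pi : probability T R) : killed_semigroup disc P -> fQ P pi 0 = 1.
Proof.
move=> [P0 _]; apply/EFin_inj; rewrite -fQE.
under eq_integral do rewrite P0// diracT.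
by rewrite integral_cst//= mul1e probability_setT.
Qed.

Lemma fQ_nat d (T : measurableType d) (R : realType) disc (P : R -> R.-spker T ~> T)
  (pi : probability T R) t n : killed_semigroup disc P -> is_QSD disc P pi ->
  is_time disc t -> fQ P pi (n%:R * t) = fQ P pi t ^+ n.
Proof.
move=> hP hQ ht; elim: n => [|n IH]; first by rewrite mul0r (fQ0 pi hP) expr0.
rewrite -addn1 natrD mulrDl mul1r (fQ_mul hP hQ) ?IH ?exprD ?expr1 //; exact: timeMn.
Qed.

Lemma bernoulli_ineq (R : realType) (delta : R) n : 0 <= delta ->
  1 + n%:R * delta <= (1 + delta) ^+ n.
Proof.
move=> d0; elim: n => [|n IH]; first by rewrite mul0r addr0 expr0.
rewrite exprSr -addn1 natrD mulrDl mul1r.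
have h1 : 0 <= n%:R * delta by rewrite mulr_ge0.
nra.
Qed.

Lemma fQ_lower d (T : measurableType d) (R : realType) disc (P : R -> R.-spker T ~> T)
  (pi : probability T R) t0 theta : killed_semigroup disc P -> is_QSD disc P pi ->
  is_time disc t0 -> 0 < theta < 1 ->
  theta * powR (fQ P pi 1) t0 <= fQ P pi t0.
Proof.
move=> hP hQ ht /andP[th0 th1].
set lam := fQ P pi 1.
have lam0 : 0 < lam by apply: (fQ_gt0 hQ); exact: (time_nat _ _ 1).
have lam1 : lam <= 1 by exact: fQ_le1.
set Pw := powR lam t0.
have Pw0 : 0 < Pw by exact: powR_gt0.
set f := fQ P pi t0.
have f0 : 0 <= f by exact: fQ_ge0.
have t00 : 0 <= t0 by exact: time_ge0 ht.
have fnat k : fQ P pi k%:R = lam ^+ k.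
  by rewrite -[k%:R]mulr1 (fQ_nat _ hP hQ) //; exact: (time_nat _ _ 1).
have claimA n : lam * Pw ^+ n <= f ^+ n.
  have [m [m1 m2 mt]] : exists m : nat, [/\ n%:R * t0 <= m%:R, m%:R <= n%:R * t0 + 1 &
      is_time disc (m%:R - n%:R * t0)].
    case: disc hP hQ ht => hP hQ ht.
      case: ht => k kE; exists (n * k)%N; rewrite kE -natrM subrr lerDl ler01; split => //.
      exact: (time0 _ true).
    have nt0 : 0 <= n%:R * t0 by rewrite mulr_ge0.
    exists (trunc (n%:R * t0)).+1; split.
    - exact/ltW/truncnS_gt.
    - by rewrite -addn1 natrD lerD2r truncn_le.
    - by rewrite /= subr_ge0; exact/ltW/truncnS_gt.
  have e1 : f ^+ n = fQ P pi (n%:R * t0) by rewrite (fQ_nat _ hP hQ).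
  have e2 : fQ P pi m%:R = fQ P pi (n%:R * t0) * fQ P pi (m%:R - n%:R * t0).
    by rewrite -(fQ_mul hP hQ) ?[n%:R * t0 + _]addrC ?subrK //; exact: timeMn.
  have e3 : fQ P pi m%:R <= f ^+ n.
    rewrite e2 e1; apply: ler_piMr; [exact: fQ_ge0|exact: fQ_le1].
  apply: le_trans e3; rewrite fnat -(powR_mulrn m (ltW lam0)).
  have -> : lam * Pw ^+ n = powR lam (n%:R * t0 + 1).
    rewrite powRD; last by apply/implyP => _; rewrite (gt_eqF lam0).
    rewrite powRr1 ?(ltW lam0)// mulrC mulrC [n%:R * _]mulrC powRrM powR_mulrn//.
    by rewrite mulrC.
    exact: powR_ge0.
  have hl : 0 < lam <= 1 by rewrite lam0 lam1.
  exact: (ger_powR hl m2).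
rewrite leNgt; apply/negP => hf.
set delta := theta^-1 - 1.
have delta0 : 0 < delta by rewrite subr_gt0 invf_gt1.
have thd : theta * (1 + delta) = 1 by rewrite /delta addrC subrK mulfV// gt_eqF.
have [n hn] : exists n : nat, (lam * delta)^-1 < n%:R.
  by exists (archi_bound ((lam * delta)^-1)); apply: archi_boundP; rewrite invr_ge0 mulr_ge0// ltW.
have B := bernoulli_ineq n (ltW delta0).
have A := claimA n.
have C : f ^+ n <= (theta * Pw) ^+ n by rewrite lerXn2r// ?nnegrE ?ltW// mulr_gt0.
have D : lam * Pw ^+ n <= theta ^+ n * Pw ^+ n by rewrite -exprMn; exact: le_trans C.
have E : lam <= theta ^+ n by rewrite -(ler_pM2r (exprn_gt0 n Pw0)).
have F : lam * (1 + delta) ^+ n <= 1.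
  have hh : lam * (1+delta)^+n <= theta^+n * (1+delta)^+n by rewrite ler_pM2r ?exprn_gt0 // addr_gt0.
  by move: hh; rewrite -exprMn thd expr1n.
have G : lam * (1 + n%:R * delta) <= 1.
  by apply: le_trans F; rewrite ler_pM2l.
have hld : 0 < lam * delta by rewrite mulr_gt0.
have H : 1 < lam * (n%:R * delta).
  by move: hn; rewrite -[(lam * delta)^-1]mul1r ltr_pdivrMr // mulrCA.
move: G; rewrite mulrDr mulr1; lra.
Qed.


Unset Implicit Arguments.
Set Strict Implicit.

Lemma spkerE d (T : measurableType d) (R : realType) (k : R.-spker T ~> T) x (S : set T) :
  measurable S -> k x S = (fine (k x S))%:E.
Proof.
move=> mS; rewrite fineK// ge0_fin_numE//.
apply: (@le_lt_trans _ _ 1%E); last by rewrite ltry.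
apply: le_trans (sprob_kernel_le1 k x).
by apply: le_measure => //; rewrite inE.
Qed.

Lemma spker_fine_ge0 d (T : measurableType d) (R : realType) (k : R.-spker T ~> T) x (S : set T) :
  0 <= fine (k x S).
Proof. exact: fine_ge0. Qed.

Lemma probE d (T : measurableType d) (R : realType) (p : probability T R) (S : set T) :
  measurable S -> p S = (fine (p S))%:E.
Proof.
move=> mS; rewrite fineK// ge0_fin_numE//.
by apply: le_lt_trans (probability_le1 p mS) _; rewrite ltry.
Qed.

Lemma limit_theta (R : realType) (c r : R) : 0 <= r ->
  (forall theta, 0 < theta < 1 -> theta * theta * c <= r) -> c <= r.
Proof.
move=> r0 H; rewrite leNgt; apply/negP => hc.
have c0 : 0 < c by apply: le_lt_trans hc.
set q := r / c.
have q0 : 0 <= q by rewrite divr_ge0// ltW.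
have q1 : q < 1 by rewrite ltr_pdivrMr// mul1r.
have hr : r = q * c by rewrite /q mulrVK ?unitfE ?gt_eqF.
have h : (3 + q) / 4 * ((3 + q) / 4) * c <= q * c.
  by rewrite -hr; apply: H; apply/andP; split; lra.
move: h; rewrite ler_pM2r//.
nra.
Qed.



Ltac side := try (by move=> ? _; rewrite lee_fin); try (by rewrite lee_fin);
  try (exact/measurable_EFinP/measurable_realfun.measurable_indic); try exact: measurable_kernel.
Theorem mainTheorem10 (R : realType) (M : metricType R) (x0 : M) (disc : bool)
  (Lam : {sigma_finite_measure set (borel_space x0) -> \bar R})
  (P : R -> R.-spker (borel_space x0) ~> (borel_space x0))
  (pi : probability (borel_space x0) R)
  (dpi : borel_space x0 -> R)
  (A : set (borel_space x0)) (nu1 : probability (borel_space x0) R)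
  (c1 t1 : R)
  (psi : borel_space x0 -> R) (t0 a c0' : R)
  (Ptilde : R.-spker (borel_space x0) ~> (borel_space x0)) :
  (* Lambda has full support *)
  (forall U : set M, open U -> U !=set0 -> (0 < Lam U)%E) ->
  (* (X_t) is a killed Markov process with semigroup P *)
  killed_semigroup disc P ->
  (* pi is a QSD *)
  is_QSD disc P pi ->
  (* (DAD): pi in P_infty(Lambda), with density dpi = dpi/dLambda *)
  measurable_fun setT dpi -> (forall x, 0 <= dpi x) ->
  (forall B, measurable B -> pi B = (\int[Lam]_(x in B) (dpi x)%:E)%E) ->
  (ess_sup Lam (fun x => (dpi x)%:E) < +oo)%E ->
  (* Dobrushin condition *)
  measurable A -> (Lam A < +oo)%E -> nu1 (~` A) = 0%E ->
  0 < c1 -> is_time disc t1 -> 0 < t1 ->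
  (forall x, (0 < P t1 x setT)%E) ->
  (forall x B, measurable B ->
     c1 * fine (nu1 B) <= fine (P t1 x B) / fine (P t1 x setT)) ->
  (* (AD) with nu := Lambda|_A / Lambda(A) *)
  measurable_fun setT psi ->
  (exists K, forall x, `|psi x| <= K) ->
  (exists e, 0 < e /\ forall x, e <= psi x) ->
  is_time disc t0 -> 0 < t0 -> 0 < a -> 0 < c0' ->
  (forall E : set (borel_space x0 * borel_space x0), measurable E ->
     (\int[Lam]_x ((psi x)%:E * \int[P t0 x]_y (\1_E (x, y))%:E)
      = a%:E * \int[Lam]_y ((psi y)%:E * \int[Ptilde y]_x (\1_E (x, y))%:E))%E) ->
  (\forall y \ae Lam, (0 < Ptilde y setT)%E) ->
  ~ mutually_singular (normalized_restriction Lam A) pi ->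
  (\forall y \ae Lam, forall B, measurable B ->
     c0' * fine (normalized_restriction Lam A B)
       <= fine (Ptilde y B) / fine (Ptilde y setT)) ->
  (* conclusion *)
  let lam := lambda_QSD P pi in
  let t3 := t0 + t1 in
  let c3 := powR lam t0 * c0' * c1 /
            (fine (Lam A) * sup_norm psi * sup_norm (fun x => (psi x)^-1)
             * fine (ess_sup Lam (fun x => (dpi x)%:E))) in
  forall x (B : set (borel_space x0)), measurable B ->
    c3 * fine (pi B) <= fine (P t3 x B) / fine (P t3 x setT).

Proof.
move=> Lfull hP hQ mdpi dpi0 dpiE esfin mA LAfin nu1A c1pos t1time t1pos Pt1pos Dob
  mpsi [Kp hK] [e [e0 he]] t0time t0pos apos c0pos adj Ptpos nms AD lam t3 c3 x B mB.
rewrite /c3 /t3 /lam; clear c3 t3 lam.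
change (lambda_QSD P pi) with (fQ P pi 1).
set L := fine (Lam A).
set S := sup_norm psi.
set Si := sup_norm (fun x => (psi x)^-1).
set N := fine (ess_sup Lam (fun x => (dpi x)%:E)).
set p := fine (pi B).
set r := fine (P (t0 + t1) x B) / fine (P (t0 + t1) x setT).
have psi0 y : 0 < psi y by apply: lt_le_trans (he y).
have S_ub y : `|psi y| <= S.
  apply: ub_le_sup; last by exists y.
  by exists Kp => _ [z _ <-]; exact: hK.
have Si_ub y : `|(psi y)^-1| <= Si.
  apply: ub_le_sup; last by exists y.
  exists e^-1 => _ [z _ <-]; rewrite ger0_norm; last by rewrite invr_ge0 ltW.
  by rewrite lef_pV2 ?posrE.
have psiS y : psi y <= S by apply: le_trans (S_ub y); exact: ler_norm.
have Sipsi y : 1 <= Si * psi y.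
  have h := Si_ub y; rewrite ger0_norm in h; last by rewrite invr_ge0 ltW.
  by rewrite -(ler_pM2r (psi0 y)) mulVf ?gt_eqF// in h.
have S0 : 0 <= S by apply: le_trans (S_ub x).
have Si0 : 0 <= Si by apply: le_trans (Si_ub x).
have L0 : 0 <= L by exact: fine_ge0.
have p0 : 0 <= p by exact: fine_ge0.
have r0 : 0 <= r by rewrite divr_ge0// fine_ge0.
apply: limit_theta => //.
move=> th /andP[th0 th1].
set num := powR (fQ P pi 1) t0 * c0' * c1.
have num0 : 0 <= num by rewrite !mulr_ge0 ?powR_ge0// ltW.
have [hD|hD] := lerP (L * S * Si * N) 0.
  have c3le : num / (L * S * Si * N) <= 0 by rewrite mulr_ge0_le0 // invr_le0.
  apply: le_trans r0.
  by rewrite mulr_ge0_le0 ?mulr_ge0 ?(ltW th0)// mulr_le0_ge0.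
have N0 : 0 < N.
  rewrite ltNge; apply/negP => hN; move: hD; rewrite ltNge mulr_ge0_le0//.
  by rewrite !mulr_ge0.
have L0' : 0 < L.
  rewrite lt_neqAle L0 andbT; apply/eqP => hL; move: hD; rewrite -hL !mul0r ltxx //.
have S0' : 0 < S.
  rewrite lt_neqAle S0 andbT; apply/eqP => hS; move: hD; rewrite -hS mulr0 !mul0r ltxx //.
have Si0' : 0 < Si.
  rewrite lt_neqAle Si0 andbT; apply/eqP => hS; move: hD; rewrite -hS mulr0 !mul0r ltxx //.
have esE : ess_sup Lam (fun x => (dpi x)%:E) = N%:E.
  by move: N0; rewrite /N; case: (ess_sup _ _) => [r'| |] //=; rewrite ltxx //.
have dpiN : \forall y \ae Lam, ((dpi y)%:E <= N%:E)%E by rewrite -esE; exact: ess_sup_ge.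
have pi_le S' : measurable S' -> (pi S' <= N%:E * Lam S')%E.
  move=> mS; rewrite dpiE//.
  have -> : (N%:E * Lam S' = \int[Lam]_(y in S') (cst N%:E y))%E by rewrite integral_cst.
  apply: ae_ge0_le_integral => //.
  - by move=> y _; rewrite lee_fin.
  - by apply: measurable_funTS; exact/measurable_EFinP.
  - by move=> y _; rewrite lee_fin ltW.
  - by apply: filterS dpiN => y h _; exact h.
have [pz|ppos] := eqVneq p 0.
  by rewrite pz !mulr0.
have ppos' : 0 < p by rewrite lt_neqAle eq_sym ppos p0.
set f0 := fQ P pi t0.
have f0p : 0 < f0 by exact: (fQ_gt0 hQ t0time).
have glow : th * powR (fQ P pi 1) t0 <= f0.
  by apply: (fQ_lower hP hQ t0time); apply/andP.
set K0 := c0' * f0 * p / (S * L * N * Si).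
have K00 : 0 <= K0 by rewrite divr_ge0 ?mulr_ge0 ?ltW.
set Kt := th * K0.
have Kt0 : 0 <= Kt by rewrite mulr_ge0// ltW.
pose g := fun y => P t0 y B.
have mg : measurable_fun setT g by exact: measurable_kernel.
have g0 y : (0 <= g y)%E by [].
set H := A `&` [set y | (g y <= Kt%:E)%E].
have mH : measurable H.
  by apply: measurable_lee => //; exact: measurable_funTS.
have HA : H `<=` A by move=> y [].
have LHE : Lam H = (fine (Lam H))%:E.
  rewrite fineK// ge0_fin_numE//; apply: le_lt_trans LAfin.
  by apply: le_measure => //; rewrite inE.
set h := fine (Lam H).
have h0 : 0 <= h by exact: fine_ge0.
have pE : pi B = p%:E by exact: probE.
have ind1 (U V : set (borel_space x0)) u v : \1_(U `*` V) (u, v) = \1_U u * \1_V v :> R.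
  by rewrite !indicE in_setX /=; case: (u \in U); case: (v \in V); rewrite ?mul1r ?mul0r.
have mpsiE : measurable_fun setT (fun y => (psi y)%:E) by exact/measurable_EFinP.
have psiE0 y : (0 <= (psi y)%:E)%E by rewrite lee_fin ltW.
have hzero : h = 0.
  apply/eqP; rewrite eq_le h0 andbT leNgt; apply/negP => hpos.
  have mpg : measurable_fun setT (fun y => (psi y)%:E * g y)%E by exact: emeasurable_funM.
  have I1 : (\int[pi]_y g y = (f0 * p)%:E)%E by rewrite /g (QSD_set hQ)// pE EFinM.
  have I2 : (\int[pi]_y g y <= N%:E * \int[Lam]_y g y)%E.
    rewrite -(ge0_integral_mscale Lam measurableT (NngNum (ltW N0)))//=.
    by apply: integral_le_measure => // A' mA'; exact: pi_le.
  have I3 : (\int[Lam]_y g y <= Si%:E * \int[Lam]_y ((psi y)%:E * g y))%E.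
    rewrite -ge0_integralZl//; try (by move=> y _; rewrite mule_ge0); try (by rewrite lee_fin).
    apply: ge0_le_integral => //; try (by move=> y _; rewrite !mule_ge0// lee_fin); try exact: measurable_funeM.
    move=> y _; rewrite muleA -EFinM -{1}(mul1e (g y)).
    by apply: lee_wpmul2r => //; rewrite lee_fin.
  have inner1 u : (\int[P t0 u]_v (\1_(setT `*` B) (u, v))%:E = g u)%E.
    under eq_integral do rewrite ind1 indicT mul1r.
    by rewrite integral_indic// setIT.
  have inner2 v : (\int[Ptilde v]_u (\1_(setT `*` B) (u, v))%:E = (\1_B v)%:E * Ptilde v setT)%E.
    under eq_integral do rewrite ind1 indicT mul1r.
    by rewrite integral_cst.
  have XE : (\int[Lam]_y ((psi y)%:E * g y) =
      a%:E * \int[Lam]_y ((psi y)%:E * ((\1_B y)%:E * Ptilde y setT)))%E.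
    transitivity (\int[Lam]_u ((psi u)%:E * \int[P t0 u]_v (\1_(setT `*` B) (u, v))%:E))%E.
      by apply: eq_integral => u _; rewrite inner1.
    rewrite adj; last exact: measurableX.
    by congr (_ * _)%E; apply: eq_integral => v _; rewrite inner2.
  have inner3 u : (\int[P t0 u]_v (\1_(H `*` B) (u, v))%:E = (\1_H u)%:E * g u)%E.
    under eq_integral do rewrite ind1 EFinM.
    rewrite ge0_integralZl//; side.
    by rewrite integral_indic// setIT.
  have inner4 v : (\int[Ptilde v]_u (\1_(H `*` B) (u, v))%:E = (\1_B v)%:E * Ptilde v H)%E.
    under eq_integral do rewrite ind1 mulrC EFinM.
    rewrite ge0_integralZl//; side.
    by rewrite integral_indic// setIT.
  have LHE2 : (\int[Lam]_y ((psi y)%:E * ((\1_H y)%:E * g y)) =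
      a%:E * \int[Lam]_y ((psi y)%:E * ((\1_B y)%:E * Ptilde y H)))%E.
    transitivity (\int[Lam]_u ((psi u)%:E * \int[P t0 u]_v (\1_(H `*` B) (u, v))%:E))%E.
      by apply: eq_integral => u _; rewrite inner3.
    rewrite adj; last exact: measurableX.
    by congr (_ * _)%E; apply: eq_integral => v _; rewrite inner4.
  have LHle : (\int[Lam]_y ((psi y)%:E * ((\1_H y)%:E * g y)) <= (S * Kt * h)%:E)%E.
    apply: (@le_trans _ _ (\int[Lam]_y ((S * Kt)%:E * (\1_H y)%:E))%E); last first.
      rewrite ge0_integralZl//; side; try (by rewrite lee_fin mulr_ge0).
      rewrite integral_indic// setIT.
      have hh : ((S * Kt)%:E * Lam H <= (S * Kt * h)%:E)%E by rewrite LHE -EFinM.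
      exact: hh.
    apply: ge0_le_integral => //; try (by move=> y _; rewrite !mule_ge0// lee_fin ?mulr_ge0);
      try (apply: emeasurable_funM => //; apply: emeasurable_funM => //;
           exact/measurable_EFinP/measurable_realfun.measurable_indic);
      try (apply: measurable_funeM; exact/measurable_EFinP/measurable_realfun.measurable_indic).
    move=> y _; rewrite /g (@spkerE _ _ _ (P t0) y _ mB) -!EFinM lee_fin.
    have [yH|yH] := boolP (y \in H).
      rewrite indicE yH mul1r mulr1.
      have hy : fine (P t0 y B) <= Kt.
        by move: yH; rewrite inE => -[_ /=]; rewrite /g (@spkerE _ _ _ (P t0) y _ mB) lee_fin.
      by apply: ler_pM => //; try exact: ltW; try exact: fine_ge0.
    by rewrite indicE (negbTE yH) mul0r !mulr0.
  have Wge : ((c0' * h / L)%:E * \int[Lam]_y ((psi y)%:E * ((\1_B y)%:E * Ptilde y setT))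
      <= \int[Lam]_y ((psi y)%:E * ((\1_B y)%:E * Ptilde y H)))%E.
    rewrite -ge0_integralZl//; last 3 first.
    - apply: emeasurable_funM => //; apply: emeasurable_funM => //.
      + exact/measurable_EFinP/measurable_realfun.measurable_indic.
      + exact: measurable_kernel.
    - by move=> y _; rewrite !mule_ge0// lee_fin.
    - by rewrite lee_fin !mulr_ge0// ?invr_ge0 ?ltW.
    apply: ae_ge0_le_integral => //.
    - by move=> y _; rewrite !mule_ge0// lee_fin ?mulr_ge0 ?invr_ge0 ?ltW.
    - apply: measurable_funeM; apply: emeasurable_funM => //; apply: emeasurable_funM => //.
      + exact/measurable_EFinP/measurable_realfun.measurable_indic.
      + exact: measurable_kernel.
    - by move=> y _; rewrite !mule_ge0// lee_fin.
    - apply: emeasurable_funM => //; apply: emeasurable_funM => //.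
      + exact/measurable_EFinP/measurable_realfun.measurable_indic.
      + exact: measurable_kernel.
    apply: filterS AD => y hy _.
    have := hy H mH; rewrite /normalized_restriction setIidl//= => hc.
    rewrite (@spkerE _ _ _ Ptilde y _ mH) (@spkerE _ _ _ Ptilde y _ measurableT) -!EFinM lee_fin.
    set u := fine (Ptilde y setT); set v := fine (Ptilde y H).
    have u0 : 0 <= u by exact: fine_ge0.
    have v0 : 0 <= v by exact: fine_ge0.
    have b0 : 0 <= \1_B y :> R by rewrite indicE.
    have [u00|upos] := eqVneq u 0.
      by rewrite u00 !mulr0 !mulr_ge0// ltW.
    have upos' : 0 < u by rewrite lt_neqAle eq_sym upos u0.
    rewrite -/h -/L ler_pdivlMr// mulrA in hc.
    rewrite mulrCA; apply: ler_wpM2l; first exact: ltW.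
    by rewrite mulrCA; apply: ler_wpM2l.
  have C1 : ((c0' * h / L)%:E * \int[Lam]_y ((psi y)%:E * g y) <= (S * Kt * h)%:E)%E.
    rewrite XE muleCA; apply: le_trans LHle; rewrite LHE2.
    by apply: lee_wpmul2l => //; rewrite lee_fin ltW.
  have C2 : ((f0 * p)%:E <= (N * Si)%:E * \int[Lam]_y ((psi y)%:E * g y))%E.
    rewrite -I1 EFinM -muleA; apply: le_trans I2 _.
    by apply: lee_wpmul2l => //; rewrite lee_fin ltW.
  have X0 : (0 <= \int[Lam]_y ((psi y)%:E * g y))%E by apply: integral_ge0 => y _; rewrite mule_ge0.
  have q0 : 0 < c0' * h / L by rewrite divr_gt0 ?mulr_gt0.
  have y0 : 0 < f0 * p / (N * Si) by rewrite divr_gt0 ?mulr_gt0.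
  have SKt : S * Kt * h = th * ((c0' * h / L) * (f0 * p / (N * Si))).
    rewrite /Kt /K0; field.
    by rewrite !gt_eqF.
  move: (\int[Lam]_y ((psi y)%:E * g y))%E X0 C1 C2 => [xr| |] //= X0' C1' C2'.
    rewrite lee_fin in X0'; rewrite -EFinM lee_fin in C1'; rewrite -EFinM lee_fin in C2'.
    rewrite SKt in C1'.
    have yx : f0 * p / (N * Si) <= xr by rewrite ler_pdivrMr ?mulr_gt0// [X in _ <= X]mulrC.
    move: C1' yx q0 y0 X0' th0 th1.
    set q := c0' * h / L; set yy := f0 * p / (N * Si).
    move=> C yx q0' y0' x0' th0' th1'.
    have C3 : q * xr <= th * (q * xr).
      apply: le_trans C _; apply: ler_wpM2l; first exact: ltW.
      by apply: ler_wpM2l => //; exact: ltW.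
    have qx : 0 < q * xr by apply: mulr_gt0 => //; exact: lt_le_trans yx.
    move: C3 qx th1'; clear; move: (q * xr) => z.
    nra.
  by move: C1'; rewrite mulry gtr0_sg// mul1e leNgt ltry.
have LamH0 : Lam H = 0%E by rewrite LHE -/h hzero.
have piH : pi H = 0%E.
  apply/eqP; rewrite eq_le measure_ge0 andbT.
  by apply: le_trans (pi_le _ mH) _; rewrite LamH0 mule0.
have dobE y S' : measurable S' -> ((c1 * fine (nu1 S'))%:E * P t1 y setT <= P t1 y S')%E.
  move=> mS; rewrite (@spkerE _ _ _ (P t1) y _ mS) (@spkerE _ _ _ (P t1) y _ measurableT) -EFinM lee_fin.
  have pos : 0 < fine (P t1 y setT).
    by have := Pt1pos y; rewrite (@spkerE _ _ _ (P t1) y _ measurableT) lte_fin.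
  by rewrite -ler_pdivlMr//; exact: Dob.
have nuH : nu1 H = 0%E.
  set n := fine (nu1 H).
  have nE : nu1 H = n%:E by exact: probE.
  have n0 : 0 <= n by exact: fine_ge0.
  have f1p : 0 < fQ P pi t1 by exact: (fQ_gt0 hQ t1time).
  have I : ((c1 * n)%:E * (fQ P pi t1)%:E <= 0)%E.
    have -> : 0%E = (\int[pi]_y P t1 y H)%E by rewrite (QSD_set hQ)// piH mule0.
    rewrite -fQE -ge0_integralZl//; try exact: measurable_kernel;
      try (by rewrite lee_fin mulr_ge0// ltW).
    apply: ge0_le_integral => //; try (by move=> y _; rewrite mule_ge0// lee_fin mulr_ge0// ltW);
      try (by apply: measurable_funeM; exact: measurable_kernel); try exact: measurable_kernel.
    by move=> y _; exact: dobE.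
  rewrite -EFinM lee_fin in I.
  have : n <= 0 by move: I; rewrite pmulr_lle0// pmulr_rle0.
  by move=> nle; rewrite nE; congr (_%:E); apply/eqP; rewrite eq_le nle n0.
set G := A `\` H.
have mG : measurable G by exact: measurableD.
have nuG : fine (nu1 G) = 1.
  have h1 : nu1 (~` G) = 0%E.
    apply/eqP; rewrite eq_le measure_ge0 andbT setCD.
    apply: le_trans (measureU2 _ _ _) _ => //; first exact: measurableC.
    have hh : (nu1 (~` A) + nu1 H <= 0)%E by rewrite nu1A nuH adde0.
    exact: hh.
  move: h1; rewrite probability_setC// (@probE _ _ _ nu1 _ mG) -EFinB => -[].
  by move/eqP; rewrite subr_eq0 eq_sym => /eqP.
have CKB : P (t0 + t1) x B = (\int[P t1 x]_y g y)%E by rewrite addrC (proj2 hP).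
have CKT : P (t0 + t1) x setT = (\int[P t1 x]_y P t0 y setT)%E by rewrite addrC (proj2 hP).
set u := fine (P t1 x setT).
have upos : 0 < u by have := Pt1pos x; rewrite (@spkerE _ _ _ (P t1) x _ measurableT) lte_fin.
have low : Kt * (c1 * u) <= fine (P (t0 + t1) x B).
  rewrite -lee_fin -(@spkerE _ _ _ _ _ _ mB) CKB.
  apply: (@le_trans _ _ (\int[P t1 x]_y (Kt%:E * (\1_G y)%:E))%E).
    rewrite ge0_integralZl//; side.
    rewrite integral_indic// setIT EFinM.
    apply: lee_wpmul2l; first by rewrite lee_fin.
    by have := dobE x G mG; rewrite nuG mulr1 EFinM /u -(@spkerE _ _ _ _ _ _ measurableT).
  apply: ge0_le_integral => //; try (by move=> y _; rewrite mule_ge0// lee_fin);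
    try (apply: measurable_funeM; exact/measurable_EFinP/measurable_realfun.measurable_indic).
  move=> y _; have [yG|yG] := boolP (y \in G).
    rewrite indicE yG mule1.
    move: yG; rewrite inE => -[yA nyH].
    have [hle|hlt] := leP (g y) Kt%:E; last exact: ltW.
    by exfalso; apply: nyH; split.
  by rewrite indicE (negbTE yG) mule0.
have up : fine (P (t0 + t1) x setT) <= u.
  rewrite -lee_fin -(@spkerE _ _ _ _ _ _ measurableT) /u -(@spkerE _ _ _ _ _ _ measurableT) CKT.
  apply: (@le_trans _ _ (\int[P t1 x]_y (cst 1%E y))%E); last by rewrite integral_cst// mul1e.
  apply: ge0_le_integral => //; first exact: measurable_kernel.
  by move=> y _; exact: sprob_kernel_le1.
have wv : fine (P (t0 + t1) x B) <= fine (P (t0 + t1) x setT).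
  by rewrite -lee_fin -!spkerE//; apply: le_measure => //; rewrite inE.
have KtC : Kt * c1 <= r.
  rewrite /r; move: low up wv.
  set w := fine (P (t0 + t1) x B); set v := fine (P (t0 + t1) x setT) => low up wv.
  have [v0|vpos] := eqVneq v 0.
    rewrite v0 invr0 mulr0.
    have hh : Kt * c1 * u <= 0 by rewrite -mulrA; apply: le_trans low _; rewrite -v0.
    by move: hh; rewrite pmulr_lle0.
  have vpos' : 0 < v by rewrite lt_neqAle eq_sym vpos; apply: le_trans wv; exact: fine_ge0.
  rewrite ler_pdivlMr//; apply: le_trans low; rewrite -mulrA; apply: ler_wpM2l => //.
  by apply: ler_wpM2l => //; exact: ltW.
apply: le_trans KtC.
rewrite /Kt /K0 /num.
have eqD : S * L * N * Si = L * S * Si * N by ring.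
rewrite eqD; move: hD glow; set D := L * S * Si * N => hD glow.
have e1 : th * th * (fQ P pi 1 `^ t0 * c0' * c1 / D * p) =
  th * ((th * fQ P pi 1 `^ t0) * (c0' * c1 * p / D)) by ring.
have e2 : th * (c0' * f0 * p / D) * c1 = th * (f0 * (c0' * c1 * p / D)) by ring.
rewrite e1 e2; apply: ler_wpM2l; first exact: ltW.
apply: ler_wpM2r => //.
by rewrite divr_ge0 ?mulr_ge0 ?ltW.

Qed.
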